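(* Let $J$ be a Jordan algebra with unit element $1$ over a field $F$ of characteristic $\neq 2,3$, and let $d$ be a derivation with invertible values of $J$. Let $M$ be the sum of all ideals of $J$ contained in $\ker(d)$. Then $M$ is the largest proper ideal of $J$ (it contains every proper ideal of $J$), the map $\bar d: J/M \to J/M$, $\bar d(j+M) = d(j)+M$, is a well-defined derivation with invertible values of $J/M$, and $J/M$ is a simple Jordan algebra (its only ideals are $0$ and $J/M$).
   Context: A Jordan algebra is a commutative algebra satisfying $(x^2,y,x)=0$, where $(a,b,c)=(ab)c-a(bc)$. In a Jordan algebra $J$ with unit $1$, an element $x$ is invertible if there exists $y \in J$ with $xy = 1$ and $x^2 y = x$. A derivation with invertible values of $J$ is a nonzero derivation $d$ of $J$ such that for every $x \in J$, $d(x)$ is either invertible or equal to $0$. *)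

(* Defs.v *)
From HB Require Import structures.
From mathcomp Require Import all_boot all_order all_algebra.
Set Implicit Arguments. Unset Strict Implicit. Unset Printing Implicit Defensive.
Import Order.TTheory GRing.Theory Num.Theory.
Local Open Scope ring_scope.

Section Jordan.
Variables (F : fieldType) (V : lmodType F).

Definition char_not_2_3 : Prop := (2%:R : F) != 0 /\ (3%:R : F) != 0.

Definition bilinear_mul (mul : V -> V -> V) : Prop :=
  (forall (a : F) (x y z : V), mul (a *: x + y) z = a *: mul x z + mul y z) /\
  (forall (a : F) (x y z : V), mul z (a *: x + y) = a *: mul z x + mul z y).

Definition assoc_jordan (mul : V -> V -> V) (a b c : V) : V :=
  mul (mul a b) c - mul a (mul b c).

Definition unital_jordan_algebra (mul : V -> V -> V) (one : V) : Prop :=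
  [/\ bilinear_mul mul,
      (forall x y, mul x y = mul y x),
      (forall x y, assoc_jordan mul (mul x x) y x = 0),
      (forall x, mul one x = x) & (forall x, mul x one = x)].

Definition jinvertible (mul : V -> V -> V) (one : V) (x : V) : Prop :=
  exists y, mul x y = one /\ mul (mul x x) y = x.

Definition jderivation (mul : V -> V -> V) (d : V -> V) : Prop :=
  (forall (a : F) (x y : V), d (a *: x + y) = a *: d x + d y) /\
  (forall x y, d (mul x y) = mul (d x) y + mul x (d y)).

Definition DIV (mul : V -> V -> V) (one : V) (d : V -> V) : Prop :=
  [/\ jderivation mul d, (exists x, d x != 0) &
      (forall x, jinvertible mul one (d x) \/ d x = 0)].

Definition jideal (mul : V -> V -> V) (I : V -> Prop) : Prop :=
  [/\ I 0, (forall x y, I x -> I y -> I (x + y)),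
      (forall (a : F) x, I x -> I (a *: x)) &
      (forall x y, I x -> I (mul x y) /\ I (mul y x))].

Definition jproper_ideal (mul : V -> V -> V) (I : V -> Prop) : Prop :=
  jideal mul I /\ exists x, ~ I x.

Definition sum_ideals_in_ker (mul : V -> V -> V) (d : V -> V) (x : V) : Prop :=
  exists (n : nat) (f : 'I_n -> V),
    (forall i, exists I : V -> Prop,
        [/\ jideal mul I, (forall v, I v -> d v = 0) & I (f i)]) /\
    x = \sum_(i < n) f i.

Definition jsimple (mul : V -> V -> V) : Prop :=
  (exists x : V, x != 0) /\
  forall I, jideal mul I -> (forall x, I x -> x = 0) \/ (forall x, I x).

End Jordan.

(* Main.v *)
Require Import Defs.
From HB Require Import structures.
From mathcomp Require Import all_boot all_order all_algebra.
From Stdlib Require Import Classical.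
Import GRing.Theory.
Local Open Scope ring_scope.

Lemma linD {F : fieldType} {V W : lmodType F} {g : V -> W} :
  (forall a x y, g (a *: x + y) = a *: g x + g y) ->
  forall x y, g (x + y) = g x + g y.
Proof. by move=> H x y; have := H 1 x y; rewrite !scale1r. Qed.

Lemma lin0 {F : fieldType} {V W : lmodType F} {g : V -> W} :
  (forall a x y, g (a *: x + y) = a *: g x + g y) -> g 0 = 0.
Proof.
move=> H; apply/(addrI (g 0)); by rewrite -(linD H) !addr0.
Qed.

Lemma linZ {F : fieldType} {V W : lmodType F} {g : V -> W} :
  (forall a x y, g (a *: x + y) = a *: g x + g y) ->
  forall a x, g (a *: x) = a *: g x.
Proof. by move=> H a x; have := H a x 0; rewrite !addr0 (lin0 H) addr0. Qed.

Lemma linN {F : fieldType} {V W : lmodType F} {g : V -> W} :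
  (forall a x y, g (a *: x + y) = a *: g x + g y) ->
  forall x, g (- x) = - g x.
Proof. by move=> H x; rewrite -scaleN1r (linZ H) scaleN1r. Qed.

Lemma linB {F : fieldType} {V W : lmodType F} {g : V -> W} :
  (forall a x y, g (a *: x + y) = a *: g x + g y) ->
  forall x y, g (x - y) = g x - g y.
Proof. by move=> H x y; rewrite (linD H) (linN H). Qed.

Lemma sum_morph {V W : zmodType} (g : V -> W) {n} {f : 'I_n -> V} :
  (forall x y, g (x + y) = g x + g y) -> g 0 = 0 ->
  g (\sum_(i < n) f i) = \sum_(i < n) g (f i).
Proof. move=> hD h0; exact: (big_morph g hD h0). Qed.

Theorem mainTheorem4 (F : fieldType) (V : lmodType F)
  (mul : V -> V -> V) (one : V) (d : V -> V) :
  char_not_2_3 F ->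
  unital_jordan_algebra mul one ->
  DIV mul one d ->
  let M := sum_ideals_in_ker mul d in
  [/\ jproper_ideal mul M,
      (forall I, jproper_ideal mul I -> forall x, I x -> M x) &
      forall (Q : lmodType F) (mulQ : Q -> Q -> Q) (oneQ : Q) (pi : V -> Q),
        (forall (a : F) (x y : V), pi (a *: x + y) = a *: pi x + pi y) ->
        (forall x y, pi (mul x y) = mulQ (pi x) (pi y)) ->
        pi one = oneQ ->
        (forall q, exists x, pi x = q) ->
        (forall x, pi x = 0 <-> M x) ->
        exists dbar : Q -> Q,
          [/\ (forall x, dbar (pi x) = pi (d x)),
              unital_jordan_algebra mulQ oneQ,
              DIV mulQ oneQ dbar &
              jsimple mulQ]].
Proof.
move=> [h2 h3] [[Hl Hr] Hc Hj H1l H1r] [[dlin dmul] [x0 hx0] dinv] M.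
have mulDl x y z : mul (x + y) z = mul x z + mul y z.
  exact: (linD (fun a x y => Hl a x y z)).
have mul0l z : mul 0 z = 0 by exact: (lin0 (fun a x y => Hl a x y z)).
have mulZl a x z : mul (a *: x) z = a *: mul x z.
  exact: (linZ (fun a x y => Hl a x y z)).
have mulDr x y z : mul z (x + y) = mul z x + mul z y.
  exact: (linD (fun a x y => Hr a x y z)).
have mul0r z : mul z 0 = 0 by exact: (lin0 (fun a x y => Hr a x y z)).
have dD := linD dlin.
have d0 := lin0 dlin.
have prop1 : forall I, jproper_ideal mul I -> ~ I one.
  move=> I [[I0 ID IZ IM] [x nx]] I1; apply: nx.
  by have := (IM _ x I1).1; rewrite H1l.
have dval0 : forall I, jproper_ideal mul I -> forall z, I (d z) -> d z = 0.
  move=> I HI z Iz; case: (dinv z) => // [[u [hu _]]]; exfalso.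
  apply: (prop1 I HI); rewrite -hu.
  by case: HI => [[I0 ID IZ IM] _]; exact: (IM _ _ Iz).1.
have kerI : forall I, jproper_ideal mul I -> forall x, I x -> d x = 0.
  move=> I HI x Ix; have HI' := HI; case: HI' => [[I0 ID IZ IM] _].
  have e1 : d (mul x x) = 0.
    apply: (dval0 I HI); rewrite dmul; apply: ID.
      exact: (IM _ _ Ix).2.
    exact: (IM _ _ Ix).1.
  have e2 : I (mul (d x) (d x)).
    have : d (mul (d x) x + mul x (d x)) = 0 by rewrite -dmul e1.
    rewrite dD !dmul => e.
    set v := mul (d x) (d x).
    set A := mul (d (d x)) x.
    set B := mul x (d (d x)).
    have ee : v + v = - (A + B).
      apply/eqP; rewrite -addr_eq0; apply/eqP.
      by rewrite -e [A + v]addrC addrACA.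
    have Ivv : I (v + v).
      rewrite ee -scaleN1r; apply: IZ; apply: ID.
        exact: (IM _ _ Ix).2.
      exact: (IM _ _ Ix).1.
    have <- : (2%:R^-1 : F) *: (v + v) = v.
      by rewrite -mulr2n -scaler_nat scalerA mulVf // scale1r.
    exact: IZ.
  case: (dinv x) => [[u [hu1 hu2]] | //]; exfalso.
  have Iv : I (d x) by rewrite -hu2; exact: (IM _ u e2).1.
  apply: (prop1 I HI); rewrite -hu1; exact: (IM _ u Iv).1.
have Mker : forall x, M x -> d x = 0.
  move=> x [n [f [Hf ->]]]; rewrite (sum_morph _ dD d0).
  apply: big1 => i _; case: (Hf i) => I [_ HIk HIf]; exact: HIk.
have M0 : M 0.
  exists 0%N, (fun _ => 0); split; last by rewrite big_ord0.
  by move=> [].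
have MD : forall x y, M x -> M y -> M (x + y).
  move=> x y [n [f [Hf ->]]] [m [g [Hg ->]]].
  exists (n + m)%N, (fun k => match split k with inl i => f i | inr j => g j end).
  split.
    by move=> k; case: (split k) => [i|j]; [exact: Hf | exact: Hg].
  rewrite big_split_ord /=; congr (_ + _); apply: eq_bigr => i _.
    by rewrite (unsplitK (inl _)).
  by rewrite (unsplitK (inr _)).
have MZ : forall a x, M x -> M (a *: x).
  move=> a x [n [f [Hf ->]]]; exists n, (fun i => a *: f i); split.
    move=> i; case: (Hf i) => I [HI HIk HIf].
    exists I; split => //; case: HI => I0 ID IZ IM; exact: IZ.
  by rewrite (sum_morph _ (scalerDr a) (scaler0 _ a)).
have MM : forall x y, M x -> M (mul x y) /\ M (mul y x).
  move=> x y [n [f [Hf ->]]]; split.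
    exists n, (fun i => mul (f i) y); split.
      move=> i; case: (Hf i) => I [HI HIk HIf].
      exists I; split => //; case: HI => I0 ID IZ IM; exact: (IM _ _ HIf).1.
    by rewrite (sum_morph (fun x => mul x y) (fun a b => mulDl a b y) (mul0l y)).
  exists n, (fun i => mul y (f i)); split.
    move=> i; case: (Hf i) => I [HI HIk HIf].
    exists I; split => //; case: HI => I0 ID IZ IM; exact: (IM _ _ HIf).2.
  by rewrite (sum_morph (fun x => mul y x) (fun a b => mulDr a b y) (mul0r y)).
have Mideal : jideal mul M by split.
have Mproper : jproper_ideal mul M.
  split => //; exists x0 => /Mker hx; by rewrite hx eqxx in hx0.
have Mmax : forall I, jproper_ideal mul I -> forall x, I x -> M x.
  move=> I HI x Ix; exists 1%N, (fun _ => x); split; last by rewrite big_ord1.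
  move=> _; exists I; split => //; [exact: HI.1 | exact: kerI].
split => // Q mulQ oneQ pi pilin pimul pione surj piker.
have piD := linD pilin.
have pi0 := lin0 pilin.
have piB := linB pilin.
have surj' : forall q, exists x, pi x == q.
  by move=> q; case: (surj q) => x hx; exists x; apply/eqP.
pose s q := xchoose (surj' q).
have Hs : forall q, pi (s q) = q by move=> q; apply/eqP; exact: (xchooseP (surj' q)).
exists (fun q => pi (d (s q))).
have dbarE : forall x, pi (d (s (pi x))) = pi (d x).
  move=> x; apply/eqP; rewrite -subr_eq0 -piB -(linB dlin); apply/eqP.
  rewrite Mker ?pi0 //; apply/piker; by rewrite piB Hs subrr.
have Minv : forall z, M z -> ~ jinvertible mul one z.
  move=> z Mz [u [hu _]]; case: Mproper => _ [y ny]; apply: ny.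
  rewrite -(H1l y); apply: (MM _ _ _).1; rewrite -hu; exact: (MM _ _ Mz).1.
have QJ : unital_jordan_algebra mulQ oneQ.
  split.
  - split.
      move=> a p q r; case: (surj p) => x <-; case: (surj q) => y <-.
      case: (surj r) => z <-; by rewrite -pilin -!pimul Hl pilin.
    move=> a p q r; case: (surj p) => x <-; case: (surj q) => y <-.
    case: (surj r) => z <-; by rewrite -pilin -!pimul Hr pilin.
  - by move=> p q; case: (surj p) => x <-; case: (surj q) => y <-; rewrite -!pimul Hc.
  - move=> p q; case: (surj p) => x <-; case: (surj q) => y <-.
    by rewrite /assoc_jordan -!pimul -piB -pi0 -(Hj x y).
  - by move=> p; case: (surj p) => x <-; rewrite -pione -pimul H1l.
  - by move=> p; case: (surj p) => x <-; rewrite -pione -pimul H1r.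
split => //.
- split.
  split.
    move=> a p q; case: (surj p) => x <-; case: (surj q) => y <-.
    by rewrite -pilin !dbarE dlin pilin.
  move=> p q; case: (surj p) => x <-; case: (surj q) => y <-.
  by rewrite -pimul !dbarE dmul piD !pimul.
  exists (pi x0); rewrite dbarE; apply/negP => /eqP /piker Mx.
  case: (dinv x0) => [hi | h0]; first exact: (Minv _ Mx hi).
  by rewrite h0 eqxx in hx0.
  move=> p; case: (surj p) => x <-; rewrite dbarE.
  case: (dinv x) => [[u [hu1 hu2]] | ->]; last by right; rewrite pi0.
  left; exists (pi u); by rewrite -!pimul hu1 hu2 pione.
- split.
    case: Mproper => _ [y ny]; exists (pi y); apply/negP => /eqP /piker; exact: ny.
  move=> I [I0 ID IZ IM].
  have HI' : jideal mul (fun x => I (pi x)).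
    split.
    - by rewrite pi0.
    - by move=> x y hx hy; rewrite piD; apply: ID.
    - by move=> a x hx; rewrite (linZ pilin); apply: IZ.
    - by move=> x y hx; rewrite !pimul; apply: IM.
  case: (classic (exists x, ~ I (pi x))) => [hex | hnex].
    left => q; case: (surj q) => x <- Ix; apply/piker.
    exact: (Mmax _ (conj HI' hex)).
  right => q; case: (surj q) => x <-; apply: NNPP => nx; apply: hnex; by exists x.
Qed.
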